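(* For any modal formula $A$, $\mathbf{IL}^-(\mathbf{J2}_{+},\mathbf{J5})\vdash A$ if and only if $A$ is valid in all simplified $\mathbf{IL}^-(\mathbf{J2}_{+},\mathbf{J5})$-frames.
   Context: Modal formulas are built from propositional variables, $\top$, $\bot$ using $\to,\lor,\land$, unary $\Box$ and binary $\rhd$; $\lnot A:=A\to\bot$, $\Diamond A:=\lnot\Box\lnot A$. The logic $\mathbf{IL}^-$ has as axioms all tautologies, $\Box(A\to B)\to(\Box A\to\Box B)$, $\Box(\Box A\to A)\to\Box A$, $(A\rhd C)\land(B\rhd C)\to(A\lor B)\rhd C$, and $\Box\lnot A\leftrightarrow A\rhd\bot$; its rules are modus ponens, necessitation, from $A\to B$ infer $C\rhd A\to C\rhd B$, and from $A\to B$ infer $B\rhd C\to A\rhd C$. $\mathbf{IL}^-(\mathbf{J2}_{+},\mathbf{J5})$ is $\mathbf{IL}^-$ plus the axiom schemes $A\rhd(B\lor C)\land B\rhd C\to A\rhd C$ and $\Diamond A\rhd A$. A simplified $\mathbf{IL}^-(\mathbf{J2}_{+},\mathbf{J5})$-frame is a triple $(W,R,S)$ with $W$ non-empty, $R$ a transitive, conversely well-founded binary relation on $W$, and $S$ a transitive binary relation on $W$ with $R\subseteq S$. Forcing: arbitrary on variables, Boolean clauses as usual, $x\Vdash\Box A$ iff $y\Vdash A$ for all $y$ with $xRy$, and $x\Vdash A\rhd B$ iff for every $y$ with $xRy$ and $y\Vdash A$ there is $z$ with $xRz$, $ySz$, $z\Vdash B$. $A$ is valid in a frame if it is forced at every point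 under every forcing relation. *)

(* Defs.v *)
From Stdlib Require Import Relations Wellfounded.

Inductive formula : Type :=
| Var : nat -> formula
| Top : formula
| Bot : formula
| Imp : formula -> formula -> formula
| Or  : formula -> formula -> formula
| And : formula -> formula -> formula
| Box : formula -> formula
| Rhd : formula -> formula -> formula.

Definition Neg (A : formula) : formula := Imp A Bot.
Definition Dia (A : formula) : formula := Neg (Box (Neg A)).
Definition Iff (A B : formula) : formula := And (Imp A B) (Imp B A).

Fixpoint peval (v : formula -> bool) (A : formula) : bool :=
  match A with
  | Var _ => v A
  | Top => true
  | Bot => false
  | Imp B C => implb (peval v B) (peval v C)
  | Or B C => orb (peval v B) (peval v C)
  | And B C => andb (peval v B) (peval v C)
  | Box _ => v A
  | Rhd _ _ => v A
  end.

(* A is a tautology = an instance of a propositional tautology. *)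
Definition tautology (A : formula) : Prop := forall v, peval v A = true.

Inductive prv : formula -> Prop :=
| ax_taut A : tautology A -> prv A
| ax_K A B : prv (Imp (Box (Imp A B)) (Imp (Box A) (Box B)))
| ax_L A : prv (Imp (Box (Imp (Box A) A)) (Box A))
| ax_J3 A B C : prv (Imp (And (Rhd A C) (Rhd B C)) (Rhd (Or A B) C))
| ax_J6 A : prv (Iff (Box (Neg A)) (Rhd A Bot))
| ax_J2p A B C : prv (Imp (And (Rhd A (Or B C)) (Rhd B C)) (Rhd A C))
| ax_J5 A : prv (Rhd (Dia A) A)
| r_mp A B : prv (Imp A B) -> prv A -> prv B
| r_nec A : prv A -> prv (Box A)
| r_R1 A B C : prv (Imp A B) -> prv (Imp (Rhd C A) (Rhd C B))
| r_R2 A B C : prv (Imp A B) -> prv (Imp (Rhd B C) (Rhd A C)).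

Record sframe : Type := {
  W : Type;
  R : W -> W -> Prop;
  S : W -> W -> Prop;
  W_inhabited : inhabited W;
  R_trans : transitive W R;
  R_cwf : well_founded (fun y x => R x y);
  S_trans : transitive W S;
  R_sub_S : forall x y, R x y -> S x y
}.

Fixpoint forces (F : sframe) (V : W F -> nat -> Prop) (x : W F) (A : formula)
  : Prop :=
  match A with
  | Var p => V x p
  | Top => True
  | Bot => False
  | Imp B C => forces F V x B -> forces F V x C
  | Or B C => forces F V x B \/ forces F V x C
  | And B C => forces F V x B /\ forces F V x C
  | Box B => forall y, R F x y -> forces F V y B
  | Rhd B C => forall y, R F x y -> forces F V y B ->
                 exists z, R F x z /\ S F y z /\ forces F V z C
  end.

Definition valid_in (F : sframe) (A : formula) : Prop :=
  forall (V : W F -> nat -> Prop) (x : W F), forces F V x A.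

(* Main.v *)
Require Import Defs.
From Stdlib Require Import List Classical ClassicalEpsilon Lia Arith Relations Wellfounded Cantor.
Import ListNotations.

Definition dec (P : Prop) : bool := if excluded_middle_informative P then true else false.
Lemma dec_true P : dec P = true <-> P.
Proof. unfold dec; destruct (excluded_middle_informative P); split; intuition discriminate. Qed.

Lemma forces_peval F V x A :
  peval (fun B => dec (forces F V x B)) A = true <-> forces F V x A.
Proof.
  induction A; simpl; [apply dec_true| | | | | | apply dec_true | apply dec_true].
  - split; auto.
  - split; [discriminate| tauto].
  - rewrite <- IHA1, <- IHA2.
    destruct (peval _ A1), (peval _ A2); simpl; intuition congruence.
  - rewrite <- IHA1, <- IHA2.
    destruct (peval _ A1), (peval _ A2); simpl; intuition congruence.
  - rewrite <- IHA1, <- IHA2.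
    destruct (peval _ A1), (peval _ A2); simpl; intuition congruence.
Qed.

Lemma sound A : prv A -> forall F V x, forces F V x A.
Proof.
  induction 1; intros F V x; simpl in *.
  - apply forces_peval. apply H.
  - intros H1 H2 y Rxy. apply H1; auto.
  - intros H. 
    assert (Hw : forall y, R F x y -> forces F V y A).
    { intro y. induction y as [y IH] using (well_founded_ind (R_cwf F)).
      intro Rxy. apply (H y Rxy). intros z Ryz. apply IH; auto.
      apply (R_trans F) with y; auto. }
    exact Hw.
  - intros [H1 H2] y Rxy [Hy|Hy]; eauto.
  - split.
    + intros H y Rxy Hy. exfalso; exact (H y Rxy Hy).
    + intros H y Rxy Hy. destruct (H y Rxy Hy) as [z [_ [_ []]]].
  - intros [H1 H2] y Rxy Hy.
    destruct (H1 y Rxy Hy) as [z [Rxz [Syz [Hz|Hz]]]].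
    + destruct (H2 z Rxz Hz) as [w [Rxw [Szw Hw]]].
      exists w; split; [auto|split; [apply (S_trans F) with z; auto|auto]].
    + exists z; auto.
  - intros y Rxy Hy.
    destruct (classic (exists z, R F y z /\ forces F V z A)) as [[z [Ryz Hz]]|Hn].
    + exists z. split. { apply (R_trans F) with y; auto. } split. { apply R_sub_S; auto. } auto.
    + exfalso; apply Hy; intros z Ryz Hz; apply Hn; eauto.
  - apply IHprv1, IHprv2.
  - intros y _; apply IHprv.
  - intros H1 y Rxy Hy. destruct (H1 y Rxy Hy) as [z [? [? ?]]].
    exists z; split; [auto|split; [auto|apply IHprv; auto]].
  - intros H1 y Rxy Hy. apply H1; [exact Rxy| apply IHprv; exact Hy].
Qed.

Ltac taut := let v := fresh "v" in intro v; unfold Iff, Dia, Neg in *; simpl;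
  repeat match goal with
         | |- context [peval v ?X] => destruct (peval v X)
         | |- context [v ?X] => destruct (v X)
         end; reflexivity.

Lemma mp1 P Q : tautology (Imp P Q) -> prv P -> prv Q.
Proof. intros T H. exact (r_mp _ _ (ax_taut _ T) H). Qed.
Lemma mp2 P1 P2 Q : tautology (Imp P1 (Imp P2 Q)) -> prv P1 -> prv P2 -> prv Q.
Proof. intros T H1 H2. exact (r_mp _ _ (r_mp _ _ (ax_taut _ T) H1) H2). Qed.
Lemma mp3 P1 P2 P3 Q : tautology (Imp P1 (Imp P2 (Imp P3 Q))) -> prv P1 -> prv P2 -> prv P3 -> prv Q.
Proof. intros T H1 H2 H3. exact (r_mp _ _ (r_mp _ _ (r_mp _ _ (ax_taut _ T) H1) H2) H3). Qed.
Lemma mp4 P1 P2 P3 P4 Q : tautology (Imp P1 (Imp P2 (Imp P3 (Imp P4 Q)))) -> prv P1 -> prv P2 -> prv P3 -> prv P4 -> prv Q.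
Proof. intros T H1 H2 H3 H4. exact (r_mp _ _ (r_mp _ _ (r_mp _ _ (r_mp _ _ (ax_taut _ T) H1) H2) H3) H4). Qed.
Lemma mp5 P1 P2 P3 P4 P5 Q : tautology (Imp P1 (Imp P2 (Imp P3 (Imp P4 (Imp P5 Q))))) -> prv P1 -> prv P2 -> prv P3 -> prv P4 -> prv P5 -> prv Q.
Proof. intros T H1 H2 H3 H4 H5. exact (r_mp _ _ (r_mp _ _ (r_mp _ _ (r_mp _ _ (r_mp _ _ (ax_taut _ T) H1) H2) H3) H4) H5). Qed.

Lemma box_mono A B : prv (Imp A B) -> prv (Imp (Box A) (Box B)).
Proof. intro H. exact (r_mp _ _ (ax_K A B) (r_nec _ H)). Qed.

Fixpoint conj (L : list formula) : formula :=
  match L with [] => Top | x :: L => And x (conj L) end.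
Fixpoint disj (L : list formula) : formula :=
  match L with [] => Bot | x :: L => Or x (disj L) end.

Lemma conj_intro G L : (forall x, In x L -> prv (Imp G x)) -> prv (Imp G (conj L)).
Proof.
  induction L as [|a L IH]; simpl; intro H.
  - apply ax_taut; taut.
  - apply mp2 with (Imp G a) (Imp G (conj L)); [taut| apply H; auto | apply IH; auto].
Qed.

Lemma conj_in L x : In x L -> prv (Imp (conj L) x).
Proof.
  induction L as [|a L IH]; simpl; [tauto|]. intros [<-|H].
  - apply ax_taut; taut.
  - apply mp1 with (Imp (conj L) x); [taut| auto].
Qed.

Lemma conj_app L1 L2 : prv (Imp (conj (L1 ++ L2)) (And (conj L1) (conj L2))).
Proof.
  induction L1 as [|a L IH]; simpl.
  - apply ax_taut; taut.
  - apply mp1 with (Imp (conj (L ++ L2)) (And (conj L) (conj L2))); [taut|auto].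
Qed.

Lemma disj_in L x : In x L -> prv (Imp x (disj L)).
Proof.
  induction L as [|a L IH]; simpl; [tauto|]. intros [<-|H].
  - apply ax_taut; taut.
  - apply mp1 with (Imp x (disj L)); [taut| auto].
Qed.

Lemma disj_elim L G : (forall x, In x L -> prv (Imp x G)) -> prv (Imp (disj L) G).
Proof.
  induction L as [|a L IH]; simpl; intro H.
  - apply ax_taut; taut.
  - apply mp2 with (Imp a G) (Imp (disj L) G); [taut| apply H; auto | apply IH; auto].
Qed.

Lemma disj_app_l L1 L2 : prv (Imp (disj L1) (disj (L1 ++ L2))).
Proof. apply disj_elim; intros; apply disj_in, in_or_app; auto. Qed.
Lemma disj_app_r L1 L2 : prv (Imp (disj L2) (disj (L1 ++ L2))).
Proof. apply disj_elim; intros; apply disj_in, in_or_app; auto. Qed.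

Definition derives (G : formula -> Prop) A :=
  exists L, (forall x, In x L -> G x) /\ prv (Imp (conj L) A).
Definition consistent G := ~ derives G Bot.
Definition mcs (M : formula -> Prop) := consistent M /\ forall A, M A \/ M (Neg A).

Lemma derives_mono (G G' : formula -> Prop) A :
  (forall x, G x -> G' x) -> derives G A -> derives G' A.
Proof. intros H [L [HL Hp]]; exists L; split; auto. Qed.

Lemma derives_mp G A B : derives G (Imp A B) -> derives G A -> derives G B.
Proof.
  intros [L1 [H1 P1]] [L2 [H2 P2]]. exists (L1 ++ L2). split.
  - intros x Hx; apply in_app_or in Hx; destruct Hx; auto.
  - apply mp3 with (Imp (conj (L1 ++ L2)) (And (conj L1) (conj L2)))
       (Imp (conj L1) (Imp A B)) (Imp (conj L2) A); [taut|apply conj_app|auto|auto].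
Qed.


Lemma mcs_derives {M : formula -> Prop} (HM : mcs M) A : derives M A -> M A.
Proof.
  intros [L [HL Hp]]. destruct (proj2 HM A) as [|HN]; auto. exfalso; apply (proj1 HM).
  exists (Neg A :: L). split.
  - intros x [<-|]; auto.
  - simpl. apply mp1 with (Imp (conj L) A); [taut|auto].
Qed.

Lemma mcs_thm {M : formula -> Prop} (HM : mcs M) A : prv A -> M A.
Proof. intro H; apply (mcs_derives HM); exists []; split; [simpl; tauto|]. apply mp1 with A; [taut|auto]. Qed.

Lemma mcs_mp {M : formula -> Prop} (HM : mcs M) A B : M (Imp A B) -> M A -> M B.
Proof.
  intros H1 H2. apply (mcs_derives HM). exists [Imp A B; A]. split.
  - intros x [<-|[<-|[]]]; auto.
  - apply ax_taut; simpl; taut.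
Qed.

Lemma mcs_pmp {M : formula -> Prop} (HM : mcs M) A B : prv (Imp A B) -> M A -> M B.
Proof. intros H; apply (mcs_mp HM), (mcs_thm HM), H. Qed.
Lemma mcs_t1 {M : formula -> Prop} (HM : mcs M) A B : tautology (Imp A B) -> M A -> M B.
Proof. intros H; apply (mcs_pmp HM), ax_taut, H. Qed.
Lemma mcs_t2 {M : formula -> Prop} (HM : mcs M) A B C : tautology (Imp A (Imp B C)) -> M A -> M B -> M C.
Proof. intros H H1 H2. apply ((mcs_mp HM) B); auto. apply ((mcs_t1 HM) A); auto. Qed.
Lemma mcs_t3 {M : formula -> Prop} (HM : mcs M) A B C D : tautology (Imp A (Imp B (Imp C D))) -> M A -> M B -> M C -> M D.
Proof. intros H H1 H2 H3. apply ((mcs_mp HM) C); auto. apply ((mcs_t2 HM) A B); auto. Qed.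

Lemma mcs_bot {M : formula -> Prop} (HM : mcs M) : ~ M Bot.
Proof. intro H; apply (proj1 HM). exists [Bot]; split; [intros x [<-|[]]; auto| apply ax_taut; taut]. Qed.

Lemma mcs_not {M : formula -> Prop} (HM : mcs M) A : M (Neg A) -> ~ M A.
Proof. intros H1 H2; apply (mcs_bot HM); exact ((mcs_mp HM) _ _ H1 H2). Qed.

Lemma mcs_neg {M : formula -> Prop} (HM : mcs M) A : M (Neg A) <-> ~ M A.
Proof. split; [apply (mcs_not HM)|]. intro H; destruct (proj2 HM A); tauto. Qed.

Lemma mcs_imp {M : formula -> Prop} (HM : mcs M) A B : M (Imp A B) <-> (M A -> M B).
Proof.
  split; [apply (mcs_mp HM)|]. intro H. destruct (proj2 HM A) as [HA|HA].
  - apply ((mcs_t1 HM) B); [taut|auto].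
  - apply ((mcs_t1 HM) (Neg A)); [taut|auto].
Qed.

Lemma mcs_and {M : formula -> Prop} (HM : mcs M) A B : M (And A B) <-> M A /\ M B.
Proof.
  split.
  - intro H; split; [apply ((mcs_t1 HM) (And A B))|apply ((mcs_t1 HM) (And A B))]; auto; taut.
  - intros [H1 H2]; apply ((mcs_t2 HM) A B); auto; taut.
Qed.

Lemma mcs_or {M : formula -> Prop} (HM : mcs M) A B : M (Or A B) <-> M A \/ M B.
Proof.
  split.
  - intro H. destruct (proj2 HM A) as [HA|HA]; auto. right. apply ((mcs_t2 HM) (Or A B) (Neg A)); auto; taut.
  - intros [H|H]; [apply ((mcs_t1 HM) A)|apply ((mcs_t1 HM) B)]; auto; taut.
Qed.

Lemma mcs_top {M : formula -> Prop} (HM : mcs M) : M Top.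
Proof. apply (mcs_thm HM), ax_taut; taut. Qed.


Fixpoint enc (A : formula) : nat :=
  match A with
  | Var n => to_nat (0, n)
  | Top => to_nat (1, 0)
  | Bot => to_nat (2, 0)
  | Imp A B => to_nat (3, to_nat (enc A, enc B))
  | Or A B => to_nat (4, to_nat (enc A, enc B))
  | And A B => to_nat (5, to_nat (enc A, enc B))
  | Box A => to_nat (6, enc A)
  | Rhd A B => to_nat (7, to_nat (enc A, enc B))
  end.

Lemma pair_inj a b c d : to_nat (a, b) = to_nat (c, d) -> a = c /\ b = d.
Proof. intro H; apply to_nat_inj in H; injection H; auto. Qed.

Lemma enc_inj A B : enc A = enc B -> A = B.
Proof.
  revert B; induction A; destruct B; cbn [enc]; intro H; apply pair_inj in H;
    destruct H as [H1 H2]; try discriminate;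
    try (apply pair_inj in H2; destruct H2); f_equal; auto.
Qed.

Fixpoint stage (G : formula -> Prop) (n : nat) : formula -> Prop :=
  match n with
  | 0 => G
  | Datatypes.S n => fun A => stage G n A \/ (enc A = n /\ consistent (fun B => stage G n B \/ B = A))
  end.
Definition lind G A := exists n, stage G n A.

Lemma cons_mono (G G' : formula -> Prop) : (forall x, G x -> G' x) -> consistent G' -> consistent G.
Proof. intros H C D; apply C; eapply derives_mono; eauto. Qed.

Lemma stage_mono G m n A : m <= n -> stage G m A -> stage G n A.
Proof. induction 1; simpl; auto. Qed.

Lemma stage_cons G n : consistent G -> consistent (stage G n).
Proof.
  intro HG; induction n; simpl; auto.
  destruct (classic (exists A, enc A = n /\ consistent (fun B => stage G n B \/ B = A))) as [[A [HA Hc]]|Hn].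
  - apply cons_mono with (fun B => stage G n B \/ B = A); auto.
    intros x [Hx|[Hx _]]; auto. right; apply enc_inj; congruence.
  - apply cons_mono with (stage G n); auto.
    intros x [Hx|[Hx Hc]]; auto. exfalso; apply Hn; eauto.
Qed.

Lemma list_stage G L : (forall x, In x L -> lind G x) -> exists N, forall x, In x L -> stage G N x.
Proof.
  induction L as [|a L IH]; intro H.
  - exists 0; simpl; tauto.
  - destruct IH as [N HN]; [intros; apply H; simpl; auto|].
    destruct (H a (or_introl eq_refl)) as [m Hm].
    exists (max N m). intros x [<-|Hx].
    + apply stage_mono with m; auto; lia.
    + apply stage_mono with N; auto; lia.
Qed.

Lemma lind_cons G : consistent G -> consistent (lind G).
Proof.
  intros HG [L [HL Hp]]. destruct (list_stage G L HL) as [N HN].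
  apply (stage_cons G N HG). exists L; auto.
Qed.

Lemma gen_deduction (G P : formula -> Prop) L C :
  (forall x, In x L -> G x \/ P x) -> prv (Imp (conj L) C) ->
  exists L' D, (forall x, In x L' -> G x) /\ (forall x, In x D -> P x) /\
    prv (Imp (conj L') (Imp (conj D) C)).
Proof.
  revert C; induction L as [|a L IH]; intros C HL Hp; simpl in *.
  - exists [], []. split; [simpl; tauto|split; [simpl; tauto|]].
    apply mp1 with (Imp Top C); [taut|auto].
  - destruct (IH (Imp a C)) as [L' [D [H1 [H2 H3]]]]; auto.
    { apply mp1 with (Imp (And a (conj L)) C); [taut|auto]. }
    destruct (HL a (or_introl eq_refl)) as [Ha|Ha].
    + exists (a :: L'), D. split; [intros x [<-|]; auto|split; auto].
      simpl. apply mp1 with (Imp (conj L') (Imp (conj D) (Imp a C))); [taut|auto].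
    + exists L', (a :: D). split; auto. split; [intros x [<-|]; auto|].
      simpl. apply mp1 with (Imp (conj L') (Imp (conj D) (Imp a C))); [taut|auto].
Qed.

Lemma conj_all_eq D A : (forall x, In x D -> x = A) -> prv (Imp A (conj D)).
Proof.
  intro H. apply conj_intro. intros x Hx. rewrite (H x Hx). apply ax_taut; taut.
Qed.

Lemma deduction1 G A C : derives (fun B => G B \/ B = A) C -> derives G (Imp A C).
Proof.
  intros [L [HL Hp]]. destruct (gen_deduction G (fun B => B = A) L C HL Hp) as [L' [D [H1 [H2 H3]]]].
  exists L'. split; auto.
  apply mp2 with (Imp (conj L') (Imp (conj D) C)) (Imp A (conj D)); [taut|auto|].
  apply conj_all_eq; auto.
Qed.

Lemma lind_max G : consistent G -> forall A, lind G A \/ lind G (Neg A).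
Proof.
  intros HG A.
  destruct (classic (consistent (fun B => stage G (enc A) B \/ B = A))) as [Hc|Hn].
  - left. exists (Datatypes.S (enc A)). simpl. right; auto.
  - destruct (classic (consistent (fun B => stage G (enc (Neg A)) B \/ B = Neg A))) as [Hc'|Hn'].
    + right. exists (Datatypes.S (enc (Neg A))). simpl. right; auto.
    + exfalso. apply NNPP in Hn. apply NNPP in Hn'.
      apply deduction1 in Hn. apply deduction1 in Hn'.
      apply (lind_cons G HG).
      apply derives_mp with (Neg A).
      * eapply derives_mono; [|exact Hn']. intros x Hx; exists (enc (Neg A)); auto.
      * eapply derives_mono; [|exact Hn]. intros x Hx; exists (enc A); auto.
Qed.

Lemma lindenbaum G : consistent G -> exists M, mcs M /\ forall A, G A -> M A.
Proof.
  intro HG. exists (lind G). split; [split; [apply lind_cons; auto|apply lind_max; auto]|].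
  intros A HA; exists 0; auto.
Qed.

Lemma ax4_mcs {M} (HM : mcs M) A : M (Box A) -> M (Box (Box A)).
Proof.
  intro H. set (G := And A (Box A)).
  assert (H1 : prv (Imp (Box G) (Box A))) by (apply box_mono; apply ax_taut; taut).
  assert (H2 : prv (Imp A (Imp (Box G) G))) by (apply mp1 with (Imp (Box G) (Box A)); [unfold G; taut|auto]).
  apply box_mono in H2.
  assert (H3 : M (Box G)) by (apply (mcs_mp HM) with (Box (Imp (Box G) G)); [apply (mcs_thm HM), ax_L|apply (mcs_pmp HM) with (Box A); auto]).
  apply (mcs_pmp HM) with (Box G); auto. apply box_mono; apply ax_taut; unfold G; taut.
Qed.

Lemma box_conj {M} (HM : mcs M) L : (forall x, In x L -> M (Box x)) -> M (Box (conj L)).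
Proof.
  induction L as [|a L IH]; simpl; intro H.
  - apply (mcs_thm HM), r_nec, ax_taut; taut.
  - apply (mcs_mp HM) with (Box (conj L)); [|apply IH; auto].
    apply (mcs_mp HM) with (Box (Imp (conj L) (And a (conj L)))); [apply (mcs_thm HM), ax_K|].
    apply (mcs_pmp HM) with (Box a); [apply box_mono, ax_taut; taut|auto].
Qed.

Definition boxpart (X : formula -> Prop) A := exists D, X (Box D) /\ (A = D \/ A = Box D).

Lemma succ_exists X (P : formula -> Prop) : mcs X ->
  (forall D, (forall x, In x D -> P x) -> ~ X (Box (Neg (conj D)))) ->
  exists Y, mcs Y /\ (forall D, X (Box D) -> Y D /\ Y (Box D)) /\ (forall x, P x -> Y x).
Proof.
  intros HX HP.
  destruct (lindenbaum (fun A => boxpart X A \/ P A)) as [Y [HY HGY]].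
  - intros [L [HL Hp]]. destruct (gen_deduction _ _ L Bot HL Hp) as [L' [D [H1 [H2 H3]]]].
    apply (HP D H2). apply (mcs_pmp HX) with (Box (conj L')); [apply box_mono, H3|].
    apply (box_conj HX). intros x Hx. destruct (H1 x Hx) as [E [HE [->| ->]]]; auto.
    apply (ax4_mcs HX); auto.
  - exists Y; split; auto. split.
    + intros D HD; split; apply HGY; left; exists D; auto.
    + intros; apply HGY; auto.
Qed.


Lemma rR1 {M} (HM : mcs M) A B C : prv (Imp A B) -> M (Rhd C A) -> M (Rhd C B).
Proof. intro H; apply (mcs_pmp HM), r_R1, H. Qed.
Lemma rR2 {M} (HM : mcs M) A B C : prv (Imp A B) -> M (Rhd B C) -> M (Rhd A C).
Proof. intro H; apply (mcs_pmp HM), r_R2, H. Qed.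
Lemma rJ3 {M} (HM : mcs M) A B C : M (Rhd A C) -> M (Rhd B C) -> M (Rhd (Or A B) C).
Proof. intros H1 H2. apply (mcs_mp HM) with (And (Rhd A C) (Rhd B C)); [apply (mcs_thm HM), ax_J3|apply (mcs_and HM); auto]. Qed.
Lemma rJ2p {M} (HM : mcs M) A B C : M (Rhd A (Or B C)) -> M (Rhd B C) -> M (Rhd A C).
Proof. intros H1 H2. apply (mcs_mp HM) with (And (Rhd A (Or B C)) (Rhd B C)); [apply (mcs_thm HM), ax_J2p|apply (mcs_and HM); auto]. Qed.
Lemma rJ2 {M} (HM : mcs M) A B C : M (Rhd A B) -> M (Rhd B C) -> M (Rhd A C).
Proof. intros H1 H2. apply (rJ2p HM) with B; auto. apply (rR1 HM) with B; auto. apply ax_taut; taut. Qed.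
Lemma rJ5 {M} (HM : mcs M) A : M (Rhd (Dia A) A).
Proof. apply (mcs_thm HM), ax_J5. Qed.
Lemma rJ5' {M} (HM : mcs M) A C : M (Rhd A C) -> M (Rhd (Dia A) C).
Proof. intro H; apply (rJ2 HM) with A; auto. apply rJ5; auto. Qed.
Lemma rJ6 {M} (HM : mcs M) A : M (Box (Neg A)) <-> M (Rhd A Bot).
Proof.
  pose proof (mcs_thm HM _ (ax_J6 A)) as H. unfold Iff in H. apply (mcs_and HM) in H. destruct H as [H1 H2].
  split; apply (mcs_mp HM); auto.
Qed.
Lemma rbot {M} (HM : mcs M) A C : M (Box (Neg A)) -> M (Rhd A C).
Proof. intro H. apply (rR1 HM) with Bot; [apply ax_taut; taut|]. apply (rJ6 HM); auto. Qed.

Lemma lob_thm B : prv (Imp B (Or (And B (Box (Neg B))) (Dia (And B (Box (Neg B)))))).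
Proof.
  set (G0 := And B (Box (Neg B))).
  assert (H1 : prv (Imp (Box (Neg G0)) (Box (Imp (Box (Neg B)) (Neg B))))) by (apply box_mono, ax_taut; unfold G0; taut).
  assert (H2 : prv (Imp (Box (Neg G0)) (Box (Neg B)))).
  { apply mp2 with (Imp (Box (Neg G0)) (Box (Imp (Box (Neg B)) (Neg B)))) (Imp (Box (Imp (Box (Neg B)) (Neg B))) (Box (Neg B))); [taut|auto|apply ax_L]. }
  apply mp1 with (Imp (Box (Neg G0)) (Box (Neg B))); [unfold G0; taut|auto].
Qed.

Lemma rlob {M} (HM : mcs M) A C : M (Rhd A C) -> M (Rhd A (And C (Box (Neg C)))).
Proof.
  intro H. apply (rJ2p HM) with (Dia (And C (Box (Neg C)))).
  - apply (rR1 HM) with C; auto. apply mp1 with (Imp C (Or (And C (Box (Neg C))) (Dia (And C (Box (Neg C)))))); [taut|apply lob_thm].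
  - apply rJ5; auto.
Qed.

Lemma rboximp {M} (HM : mcs M) A G F : M (Rhd A G) -> M (Box (Imp G F)) -> M (Rhd A F).
Proof.
  intros H1 H2. apply (rJ2p HM) with (And G (Neg F)).
  - apply (rR1 HM) with G; auto. apply ax_taut; taut.
  - apply (rbot HM). apply (mcs_pmp HM) with (Box (Imp G F)); auto. apply box_mono, ax_taut; taut.
Qed.

Lemma core_b {X} (HX : mcs X) B C Dd :
  X (Box (Neg (And (And B (Box (Neg B))) (And (Box (Neg C)) (And (Neg Dd) (Box (Neg Dd))))))) ->
  X (Rhd Dd C) -> X (Rhd B C).
Proof.
  intros H HD.
  set (G0 := And B (Box (Neg B))). set (H0 := And G0 (Box (Neg C))). set (F := Or Dd (Dia Dd)).
  assert (E1 : X (Box (Neg (And H0 (Neg F))))).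
  { apply (mcs_pmp HX) with (Box (Neg (And (And B (Box (Neg B))) (And (Box (Neg C)) (And (Neg Dd) (Box (Neg Dd))))))); auto.
    apply box_mono, ax_taut; unfold H0, G0, F; taut. }
  assert (E2 : X (Rhd F C)) by (apply (rJ3 HX); auto; apply (rJ5' HX); auto).
  assert (E3 : X (Rhd H0 C)).
  { apply (rR2 HX) with (Or (And H0 F) (And H0 (Neg F))); [apply ax_taut; taut|].
    apply (rJ3 HX).
    - apply (rR2 HX) with F; auto. apply ax_taut; taut.
    - apply (rbot HX); auto. }
  assert (E4 : X (Rhd G0 C)).
  { apply (rR2 HX) with (Or H0 (And G0 (Dia C))); [apply ax_taut; unfold H0; taut|].
    apply (rJ3 HX); auto. apply (rR2 HX) with (Dia C); [apply ax_taut; taut|]. apply rJ5; auto. }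
  apply (rR2 HX) with (Or G0 (Dia G0)); [apply lob_thm|].
  apply (rJ3 HX); auto. apply (rJ5' HX); auto.
Qed.

Lemma core_c {X} (HX : mcs X) B C' E Dd :
  X (Rhd B C') -> X (Rhd Dd E) ->
  X (Box (Neg (And (And C' (Box (Neg C'))) (And (Neg E) (And (Box (Neg E)) (And (Neg Dd) (Box (Neg Dd)))))))) ->
  X (Rhd B E).
Proof.
  intros H1 H2 H3.
  set (G := And C' (Box (Neg C'))). set (F' := Or (Dia E) (Or Dd (Dia Dd))).
  assert (E1 : X (Box (Imp G (Or F' E)))).
  { apply (mcs_pmp HX) with (Box (Neg (And (And C' (Box (Neg C'))) (And (Neg E) (And (Box (Neg E)) (And (Neg Dd) (Box (Neg Dd)))))))); auto.
    apply box_mono, ax_taut; unfold G, F'; taut. }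
  apply (rJ2p HX) with F'.
  - apply (rboximp HX) with G; auto. apply (rlob HX); auto.
  - apply (rJ3 HX); [apply rJ5; auto|]. apply (rJ3 HX); auto. apply (rJ5' HX); auto.
Qed.

Definition entry := ((formula -> Prop) * nat)%type.
Definition node := (list entry * list (list entry * formula))%type.
Definition dfl : entry := (fun _ => False, 0).
Definition lastM (p : list entry) : formula -> Prop := fst (last p dfl).

Definition succ (Fb : list formula) (X Y : formula -> Prop) :=
  (forall D, X (Box D) -> Y D /\ Y (Box D)) /\
  exists D, In D Fb /\ Y (Box D) /\ ~ X (Box D).

Definition spre (p q : list entry) := exists e r, q = p ++ e :: r.
Definition pre (p q : list entry) := exists r, q = p ++ r.

Definition chainP Fb (P : list entry) :=
  forall q e1 e2 r, P = q ++ e1 :: e2 :: r -> succ Fb (fst e1) (fst e2).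

Record wfn (Fb : list formula) (v : node) : Prop := {
  wf_ne : fst v <> [];
  wf_mcs : forall e, In e (fst v) -> mcs (fst e);
  wf_chain : chainP Fb (fst v);
  wf_J0 : forall p C, In (p, C) (snd v) -> ~ pre (fst v) p;
  wf_J1 : forall p C e r, In (p, C) (snd v) -> fst v = p ++ e :: r -> fst e (Box (Neg C));
  wf_J2 : forall p e r Cs D, fst v = p ++ e :: r -> (forall c, In c Cs -> In (p, c) (snd v)) ->
            lastM p (Rhd D (disj Cs)) -> fst e (Neg D) /\ fst e (Box (Neg D)) }.

Definition Rn (u v : node) := spre (fst u) (fst v) /\ incl (snd u) (snd v) /\
  forall p C, In (p, C) (snd u) -> spre p (fst v) -> ~ lastM (fst v) C.
Definition Sn (u v : node) := incl (snd u) (snd v) /\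
  forall p C, In (p, C) (snd u) -> spre p (fst v) -> ~ lastM (fst v) C.

Lemma lastM_snoc p e : lastM (p ++ [e]) = fst e.
Proof. unfold lastM; rewrite last_last; auto. Qed.

Lemma list_snoc_cases {A} (r : list A) : r = [] \/ exists r' f, r = r' ++ [f].
Proof.
  destruct r as [|a r]; [left; auto|right].
  destruct (exists_last (l := a :: r)) as [r' [f Hf]]; [discriminate|]. exists r', f; auto.
Qed.

Lemma lastM_cons_in p e r : exists f, In f (e :: r) /\ lastM (p ++ e :: r) = fst f.
Proof.
  destruct (list_snoc_cases r) as [->|[r' [f ->]]].
  - exists e; split; [left; auto|apply lastM_snoc].
  - exists f. split; [right; apply in_or_app; right; left; auto|].
    replace (p ++ e :: r' ++ [f]) with ((p ++ e :: r') ++ [f]) by (rewrite <- app_assoc; auto).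
    apply lastM_snoc.
Qed.

Lemma split_snoc {A} (P p r : list A) (y e : A) :
  P ++ [y] = p ++ e :: r -> (r = [] /\ p = P /\ e = y) \/ (exists r', r = r' ++ [y] /\ P = p ++ e :: r').
Proof.
  intro H. destruct (list_snoc_cases r) as [->|[r' [f ->]]].
  - left. apply app_inj_tail in H. destruct H; subst; auto.
  - right. replace (p ++ e :: r' ++ [f]) with ((p ++ e :: r') ++ [f]) in H by (rewrite <- app_assoc; auto).
    apply app_inj_tail in H. destruct H; subst. exists r'; auto.
Qed.

Lemma dec_false P : dec P = false <-> ~ P.
Proof. unfold dec; destruct (excluded_middle_informative P); split; intuition discriminate. Qed.

Lemma count_le l (P Q : formula -> Prop) : (forall D, In D l -> P D -> Q D) ->
  length (filter (fun D => dec (P D)) l) <= length (filter (fun D => dec (Q D)) l).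
Proof.
  induction l as [|a l IH]; simpl; intro H; auto.
  destruct (dec (P a)) eqn:Ha; destruct (dec (Q a)) eqn:Hb; simpl.
  - apply le_n_S, IH; auto.
  - exfalso. apply (proj1 (dec_true _)) in Ha. apply (proj1 (dec_false _)) in Hb. auto.
  - apply le_S, IH; auto.
  - apply IH; auto.
Qed.

Lemma count_lt l (P Q : formula -> Prop) : (forall D, In D l -> P D -> Q D) ->
  (exists D, In D l /\ Q D /\ ~ P D) ->
  length (filter (fun D => dec (P D)) l) < length (filter (fun D => dec (Q D)) l).
Proof.
  induction l as [|a l IH]; simpl; intros H [D [HD [HQ HP]]]; [destruct HD|].
  destruct HD as [->|HD].
  - assert (Ha : dec (P D) = false) by (apply dec_false; auto).
    assert (Hb : dec (Q D) = true) by (apply dec_true; auto).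
    rewrite Ha, Hb; simpl. apply le_n_S, count_le; auto.
  - destruct (dec (P a)) eqn:Ha; destruct (dec (Q a)) eqn:Hb; simpl.
    + apply le_n_S, IH; eauto.
    + exfalso. apply (proj1 (dec_true _)) in Ha. apply (proj1 (dec_false _)) in Hb. auto.
    + apply le_S, IH; eauto.
    + apply IH; eauto.
Qed.

Definition rank Fb (X : formula -> Prop) := length (filter (fun D => dec (X (Box D))) Fb).

Lemma rank_le Fb X : rank Fb X <= length Fb.
Proof.
  unfold rank; induction Fb as [|a l IH]; simpl; auto.
  destruct (dec (X (Box a))); simpl; lia.
Qed.

Lemma rank_succ Fb X Y : succ Fb X Y -> rank Fb X < rank Fb Y.
Proof.
  intros [H1 [D [HD [HY HX]]]]. unfold rank.
  apply (count_lt Fb (fun D => X (Box D)) (fun D => Y (Box D))).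
  - intros E _ HE. apply H1; auto.
  - exists D; auto.
Qed.

Lemma chain_sub Fb P p e r : chainP Fb P -> P = p ++ e :: r ->
  forall f, In f r -> (forall D, fst e (Box D) -> fst f D /\ fst f (Box D)) /\ rank Fb (fst e) < rank Fb (fst f).
Proof.
  intro HC. revert p e; induction r as [|f1 r IH]; intros p e HP f Hf; [destruct Hf|].
  assert (Hs : succ Fb (fst e) (fst f1)) by (apply (HC p e f1 r); auto).
  destruct Hf as [<-|Hf].
  - split; [apply Hs|apply rank_succ; auto].
  - destruct (IH (p ++ [e]) f1) with f as [H1 H2]; auto.
    { rewrite <- app_assoc; auto. }
    split.
    + intros D HD. apply H1. apply (proj1 Hs D HD).
    + pose proof (rank_succ _ _ _ Hs). lia.
Qed.

Lemma chain_lastbox Fb P p e r : chainP Fb P -> P = p ++ e :: r ->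
  forall D, fst e (Box D) -> lastM P (Box D) /\ (r <> [] -> lastM P D).
Proof.
  intros HC HP D HD. destruct (list_snoc_cases r) as [->|[r' [f ->]]].
  - subst. rewrite lastM_snoc. split; auto. intro H; exfalso; auto.
  - assert (Hl : lastM P = fst f).
    { subst. replace (p ++ e :: r' ++ [f]) with ((p ++ e :: r') ++ [f]) by (rewrite <- app_assoc; auto).
      apply lastM_snoc. }
    rewrite Hl. destruct (chain_sub Fb P p e (r' ++ [f]) HC HP f) as [H1 _].
    { apply in_or_app; right; left; auto. }
    destruct (H1 D HD); auto.
Qed.

Lemma wf_last_mcs Fb v : wfn Fb v -> mcs (lastM (fst v)).
Proof.
  intro H. destruct (exists_last (wf_ne _ _ H)) as [l [a Ha]].
  rewrite Ha, lastM_snoc. apply (wf_mcs _ _ H). rewrite Ha. apply in_or_app; right; left; auto.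
Qed.

Lemma Rn_box Fb x y D : wfn Fb x -> wfn Fb y -> Rn x y -> lastM (fst x) (Box D) ->
  lastM (fst y) D /\ lastM (fst y) (Box D).
Proof.
  intros Hx Hy [[e [r Hxy]] _] HD.
  destruct (exists_last (wf_ne _ _ Hx)) as [l [a Ha]].
  rewrite Ha, lastM_snoc in HD. rewrite Ha in Hxy.
  assert (Hy' : fst y = l ++ a :: (e :: r)) by (rewrite Hxy, <- app_assoc; auto).
  destruct (chain_lastbox Fb (fst y) l a (e :: r) (wf_chain _ _ Hy) Hy' D HD) as [H1 H2].
  split; auto. apply H2; discriminate.
Qed.

Lemma Rn_rank Fb x y : wfn Fb x -> wfn Fb y -> Rn x y ->
  rank Fb (lastM (fst x)) < rank Fb (lastM (fst y)).
Proof.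
  intros Hx Hy [[e [r Hxy]] _].
  destruct (exists_last (wf_ne _ _ Hx)) as [l [a Ha]].
  rewrite Ha, lastM_snoc. rewrite Ha in Hxy.
  assert (Hy' : fst y = l ++ a :: (e :: r)) by (rewrite Hxy, <- app_assoc; auto).
  destruct (lastM_cons_in (l ++ [a]) e r) as [f [Hf Hl]].
  rewrite Hxy, Hl.
  destruct (chain_sub Fb (fst y) l a (e :: r) (wf_chain _ _ Hy) Hy' f Hf); auto.
Qed.

Lemma spre_trans p q s : spre p q -> spre q s -> spre p s.
Proof.
  intros [e [r ->]] [e' [r' ->]]. exists e, (r ++ e' :: r'). rewrite <- app_assoc; auto.
Qed.

Lemma Rn_trans x y z : Rn x y -> Rn y z -> Rn x z.
Proof.
  intros [H1 [H2 H3]] [K1 [K2 K3]]. split; [eapply spre_trans; eauto|split].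
  - intros a Ha; auto.
  - intros p C HpC Hp. apply (K3 p C); auto.
Qed.

Lemma Sn_trans x y z : Sn x y -> Sn y z -> Sn x z.
Proof.
  intros [H2 H3] [K2 K3]. split.
  - intros a Ha; auto.
  - intros p C HpC Hp. apply (K3 p C); auto.
Qed.

Lemma root_wf Fb M0 : mcs M0 -> wfn Fb ([(M0, 0)], []).
Proof.
  intro H0. constructor; simpl.
  - discriminate.
  - intros e [<-|[]]; auto.
  - intros q e1 e2 r Hq. exfalso. apply (f_equal (@length _)) in Hq.
    rewrite length_app in Hq; simpl in Hq; lia.
  - tauto.
  - tauto.
  - intros p e r Cs D Hp _ HD. destruct p as [|x p].
    + exact (False_ind _ HD).
    + exfalso. apply (f_equal (@length _)) in Hp. simpl in Hp. rewrite length_app in Hp; simpl in Hp; lia.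
Qed.

Definition Wc Fb := {v : node | wfn Fb v}.

Lemma Rc_cwf Fb : well_founded (fun y x : Wc Fb => Rn (proj1_sig x) (proj1_sig y)).
Proof.
  apply Inclusion.wf_incl with (ltof _ (fun v : Wc Fb => length Fb - rank Fb (lastM (fst (proj1_sig v))))).
  - intros [y Hy] [x Hx] H. unfold ltof; simpl in *.
    pose proof (Rn_rank Fb x y Hx Hy H). pose proof (rank_le Fb (lastM (fst y))). lia.
  - apply well_founded_ltof.
Qed.

Definition canon Fb (M0 : formula -> Prop) (H0 : mcs M0) : sframe :=
  {| W := Wc Fb;
     R := fun a b => Rn (proj1_sig a) (proj1_sig b);
     S := fun a b => Sn (proj1_sig a) (proj1_sig b);
     W_inhabited := inhabits (exist _ ([(M0, 0)], []) (root_wf Fb M0 H0));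
     R_trans := fun a b c => Rn_trans (proj1_sig a) (proj1_sig b) (proj1_sig c);
     R_cwf := Rc_cwf Fb;
     S_trans := fun a b c => Sn_trans (proj1_sig a) (proj1_sig b) (proj1_sig c);
     R_sub_S := fun a b H => proj2 H |}.

Lemma pre_refl (P : list entry) : pre P P.
Proof. exists []. rewrite app_nil_r; auto. Qed.

Lemma self_app (P : list entry) e r : P = P ++ e :: r -> False.
Proof. intro H. apply (f_equal (@length _)) in H. rewrite length_app in H; simpl in H; lia. Qed.

Lemma child_wf Fb (x : node) (O' : list (list entry * formula)) (Y : formula -> Prop) t :
  wfn Fb x -> mcs Y -> succ Fb (lastM (fst x)) Y ->
  (forall p C, In (p, C) O' -> ~ pre (fst x ++ [(Y, t)]) p) ->
  (forall p C e r, In (p, C) O' -> fst x = p ++ e :: r -> fst e (Box (Neg C))) ->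
  (forall p e r Cs D, fst x = p ++ e :: r -> (forall c, In c Cs -> In (p, c) O') ->
      lastM p (Rhd D (disj Cs)) -> fst e (Neg D) /\ fst e (Box (Neg D))) ->
  (forall C, In (fst x, C) O' -> Y (Box (Neg C))) ->
  (forall Cs D, (forall c, In c Cs -> In (fst x, c) O') -> lastM (fst x) (Rhd D (disj Cs)) ->
      Y (Neg D) /\ Y (Box (Neg D))) ->
  wfn Fb (fst x ++ [(Y, t)], O').
Proof.
  intros Hx HY Hs H0 H1 H2 H1' H2'. constructor; simpl.
  - intro H. apply app_eq_nil in H. destruct H; discriminate.
  - intros e He. apply in_app_or in He. destruct He as [He|[<-|[]]]; [apply (wf_mcs _ _ Hx); auto| auto].
  - intros q e1 e2 r Hq.
    replace (q ++ e1 :: e2 :: r) with ((q ++ [e1]) ++ e2 :: r) in Hq by (rewrite <- app_assoc; auto).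
    apply split_snoc in Hq. destruct Hq as [[-> [Hq ->]]|[r' [-> Hq]]].
    + rewrite <- Hq, lastM_snoc in Hs. exact Hs.
    + apply (wf_chain _ _ Hx q e1 e2 r'). rewrite Hq, <- app_assoc; auto.
  - exact H0.
  - intros p C e r HpC Hp. apply split_snoc in Hp. destruct Hp as [[-> [-> ->]]|[r' [-> Hp]]].
    + apply H1'; auto.
    + apply (H1 p C e r'); auto.
  - intros p e r Cs D Hp HCs HD. apply split_snoc in Hp. destruct Hp as [[-> [-> ->]]|[r' [-> Hp]]].
    + apply (H2' Cs D); auto.
    + apply (H2 p e r' Cs D); auto.
Qed.

Lemma child_R Fb x O' Y t : wfn Fb x -> succ Fb (lastM (fst x)) Y -> mcs Y -> incl (snd x) O' ->
  Rn x (fst x ++ [(Y, t)], O').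
Proof.
  intros Hx Hs HY Hi. split; [exists (Y, t), []; auto|split; auto].
  simpl. intros p C HpC [e [r Hp]]. rewrite lastM_snoc; simpl.
  apply split_snoc in Hp. destruct Hp as [[-> [-> ->]]|[r' [-> Hp]]].
  - exfalso. apply (wf_J0 _ _ Hx _ _ HpC). apply pre_refl.
  - pose proof (wf_J1 _ _ Hx p C e r' HpC Hp) as HB.
    destruct (chain_lastbox Fb (fst x) p e r' (wf_chain _ _ Hx) Hp _ HB) as [HB' _].
    apply (mcs_not HY). apply (proj1 Hs _ HB').
Qed.

Definition maxl (p : list entry) := fold_right (fun e m => max (snd e) m) 0 p.
Definition maxtag (O : list (list entry * formula)) := fold_right (fun pc m => max (maxl (fst pc)) m) 0 O.

Lemma maxl_in p e : In e p -> snd e <= maxl p.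
Proof. induction p as [|a p IH]; simpl; [tauto|]. intros [<-|H]; [lia| specialize (IH H); lia]. Qed.

Lemma maxtag_in O p C e : In (p, C) O -> In e p -> snd e <= maxtag O.
Proof.
  induction O as [|a O IH]; simpl; [tauto|]. intros [->|H] He; simpl.
  - pose proof (maxl_in p e He); lia.
  - specialize (IH H He); lia.
Qed.

Lemma fresh O P Y : forall p C, In (p, C) O -> ~ pre (P ++ [(Y, Datatypes.S (maxtag O))]) p.
Proof.
  intros p C H [r Hr].
  assert (Hin : In (Y, Datatypes.S (maxtag O)) p) by (rewrite Hr; apply in_or_app; left; apply in_or_app; right; left; auto).
  pose proof (maxtag_in O p C _ H Hin). simpl in *; lia.
Qed.

Lemma wf_pass Fb v p e r A : wfn Fb v -> fst v = p ++ e :: r -> fst e A -> fst e (Box A) -> lastM (fst v) A.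
Proof.
  intros Hv Hp HA HB. destruct (list_snoc_cases r) as [->|[r' [f ->]]].
  - rewrite Hp, lastM_snoc; auto.
  - destruct (chain_lastbox Fb (fst v) p e (r' ++ [f]) (wf_chain _ _ Hv) Hp A HB) as [_ H].
    apply H. intro Hn; apply app_eq_nil in Hn; destruct Hn; discriminate.
Qed.

Definition Gb B C Dd := And (And B (Box (Neg B))) (And (Box (Neg C)) (And (Neg Dd) (Box (Neg Dd)))).
Definition Gc C' E Dd := And (And C' (Box (Neg C'))) (And (Neg E) (And (Box (Neg E)) (And (Neg Dd) (Box (Neg Dd))))).
Ltac taut2 := unfold Gb, Gc in *; taut.

Lemma box_witness Fb x B : wfn Fb x -> In B Fb -> ~ lastM (fst x) (Box B) ->
  exists y, wfn Fb y /\ Rn x y /\ ~ lastM (fst y) B.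
Proof.
  intros Hx HB HnB. pose proof (wf_last_mcs _ _ Hx) as HX.
  destruct (succ_exists (lastM (fst x)) (fun A => A = Neg B \/ A = Box B) HX) as [Y [HY [HYb HYP]]].
  { intros D HD HDX. apply HnB.
    assert (Hc : prv (Imp (And (Neg B) (Box B)) (conj D))).
    { apply conj_intro. intros a Ha. destruct (HD a Ha) as [->| ->]; apply ax_taut; taut. }
    apply (mcs_mp HX) with (Box (Imp (Box B) B)); [apply (mcs_thm HX), ax_L|].
    apply (mcs_pmp HX) with (Box (Neg (conj D))); auto. apply box_mono.
    apply mp1 with (Imp (And (Neg B) (Box B)) (conj D)); [taut|auto]. }
  assert (Hs : succ Fb (lastM (fst x)) Y).
  { split; auto. exists B; split; auto. }
  exists (fst x ++ [(Y, Datatypes.S (maxtag (snd x)))], snd x). split; [|split].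
  - apply (child_wf Fb x (snd x) Y _ Hx HY Hs (fresh _ _ _)).
    + intros p C e r H1 H2. apply (wf_J1 _ _ Hx p C e r); auto.
    + intros p e r Cs D H1 H2 H3. apply (wf_J2 _ _ Hx p e r Cs D); auto.
    + intros C HC. exfalso. apply (wf_J0 _ _ Hx _ _ HC). apply pre_refl.
    + intros Cs D HCs HD. destruct Cs as [|c Cs].
      * simpl in HD. apply (rJ6 HX) in HD. apply HYb; auto.
      * exfalso. apply (wf_J0 _ _ Hx _ _ (HCs c (or_introl eq_refl))). apply pre_refl.
  - apply (child_R Fb); auto. apply incl_refl.
  - simpl. rewrite lastM_snoc. simpl. apply (mcs_not HY). apply HYP; auto.
Qed.

Lemma rhd_witness Fb x B C : wfn Fb x -> In (Neg B) Fb -> ~ lastM (fst x) (Rhd B C) ->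
  exists y, wfn Fb y /\ Rn x y /\ lastM (fst y) B /\
    forall z, wfn Fb z -> Rn x z -> Sn y z -> ~ lastM (fst z) C.
Proof.
  intros Hx HB HnBC. pose proof (wf_last_mcs _ _ Hx) as HX.
  set (P' := fun A => A = B \/ A = Box (Neg B) \/ A = Box (Neg C) \/
             exists D, lastM (fst x) (Rhd D C) /\ (A = Neg D \/ A = Box (Neg D))).
  assert (Hcons : forall Dl, (forall a, In a Dl -> P' a) ->
     exists Dd, lastM (fst x) (Rhd Dd C) /\ prv (Imp (Gb B C Dd) (conj Dl))).
  { induction Dl as [|a Dl IH]; intro HDl.
    - exists Bot. split; [apply (rbot HX), (mcs_thm HX), r_nec, ax_taut; taut|apply ax_taut; taut].
    - destruct IH as [Dd [HDd Himp]]; [intros; apply HDl; simpl; auto|].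
      destruct (HDl a (or_introl eq_refl)) as [->|[->|[->|[D [HD [->| ->]]]]]].
      + exists Dd; split; auto. simpl. apply mp1 with (Imp (Gb B C Dd) (conj Dl)); [taut2|auto].
      + exists Dd; split; auto. simpl. apply mp1 with (Imp (Gb B C Dd) (conj Dl)); [taut2|auto].
      + exists Dd; split; auto. simpl. apply mp1 with (Imp (Gb B C Dd) (conj Dl)); [taut2|auto].
      + exists (Or D Dd). split; [apply (rJ3 HX); auto|]. simpl.
        apply mp3 with (Imp (Box (Neg (Or D Dd))) (Box (Neg D))) (Imp (Box (Neg (Or D Dd))) (Box (Neg Dd)))
          (Imp (Gb B C Dd) (conj Dl)); [taut2| apply box_mono, ax_taut; taut | apply box_mono, ax_taut; taut | auto].
      + exists (Or D Dd). split; [apply (rJ3 HX); auto|]. simpl.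
        apply mp3 with (Imp (Box (Neg (Or D Dd))) (Box (Neg D))) (Imp (Box (Neg (Or D Dd))) (Box (Neg Dd)))
          (Imp (Gb B C Dd) (conj Dl)); [taut2| apply box_mono, ax_taut; taut | apply box_mono, ax_taut; taut | auto]. }
  destruct (succ_exists (lastM (fst x)) P' HX) as [Y [HY [HYb HYP]]].
  { intros Dl HDl HXD. destruct (Hcons Dl HDl) as [Dd [HDd Himp]]. apply HnBC.
    apply (core_b HX B C Dd); auto.
    apply (mcs_pmp HX) with (Box (Neg (conj Dl))); auto. apply box_mono.
    apply mp1 with (Imp (Gb B C Dd) (conj Dl)); [taut2|auto]. }
  assert (Hs : succ Fb (lastM (fst x)) Y).
  { split; auto. exists (Neg B); split; auto. split; [apply HYP; unfold P'; auto|].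
    intro H. destruct (HYb _ H) as [H' _]. apply (mcs_not HY B H'). apply HYP; unfold P'; auto. }
  set (O' := snd x ++ [(fst x, C)]).
  exists (fst x ++ [(Y, Datatypes.S (maxtag O'))], O'). split; [|split; [|split]].
  - apply (child_wf Fb x O' Y _ Hx HY Hs (fresh _ _ _)).
    + intros p C0 e r HpC Hp. apply in_app_or in HpC. destruct HpC as [HpC|[HpC|[]]].
      * apply (wf_J1 _ _ Hx p C0 e r); auto.
      * injection HpC; intros; subst. exfalso; eapply self_app; eauto.
    + intros p e r Cs D Hp HCs HD. apply (wf_J2 _ _ Hx p e r Cs D); auto.
      intros c Hc. destruct (in_app_or _ _ _ (HCs c Hc)) as [H|[H|[]]]; auto.
      injection H; intros; subst. exfalso; eapply self_app; eauto.
    + intros C0 HC0. apply in_app_or in HC0. destruct HC0 as [H|[H|[]]].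
      * exfalso. apply (wf_J0 _ _ Hx _ _ H). apply pre_refl.
      * injection H; intros; subst. apply HYP. unfold P'; auto.
    + intros Cs D HCs HD.
      assert (HDC : lastM (fst x) (Rhd D C)).
      { apply (rR1 HX) with (disj Cs); auto. apply disj_elim. intros c Hc.
        destruct (in_app_or _ _ _ (HCs c Hc)) as [H|[H|[]]].
        - exfalso. apply (wf_J0 _ _ Hx _ _ H). apply pre_refl.
        - injection H; intros; subst. apply ax_taut; taut. }
      split; apply HYP; unfold P'; right; right; right; exists D; auto.
  - apply (child_R Fb); auto. apply incl_appl, incl_refl.
  - simpl. rewrite lastM_snoc. simpl. apply HYP; unfold P'; auto.
  - intros z Hz [[e [r Hxz]] _] [_ HS]. apply (HS (fst x) C).
    + simpl. apply in_or_app; right; left; auto.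
    + exists e, r; auto.
Qed.

Lemma rhd_succ Fb x y B C' : wfn Fb x -> wfn Fb y -> Rn x y -> lastM (fst x) (Rhd B C') ->
  lastM (fst y) B -> In (Neg C') Fb ->
  exists z, wfn Fb z /\ Rn x z /\ Sn y z /\ lastM (fst z) C'.
Proof.
  intros Hx Hy Hxy HBC HB HC. pose proof (wf_last_mcs _ _ Hx) as HX. pose proof (wf_last_mcs _ _ Hy) as HYm.
  destruct Hxy as [[e0 [r0 Hxy]] [Hinc Havoid]].
  set (ob := fun c => In (fst x, c) (snd y)).
  set (P' := fun A => A = C' \/ A = Box (Neg C') \/ (exists c, ob c /\ (A = Neg c \/ A = Box (Neg c))) \/
      (exists Cs D, (forall c, In c Cs -> ob c) /\ lastM (fst x) (Rhd D (disj Cs)) /\ (A = Neg D \/ A = Box (Neg D)))).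
  assert (Hcons : forall Dl, (forall a, In a Dl -> P' a) ->
     exists Cs Dd, (forall c, In c Cs -> ob c) /\ lastM (fst x) (Rhd Dd (disj Cs)) /\
       prv (Imp (Gc C' (disj Cs) Dd) (conj Dl))).
  { induction Dl as [|a Dl IH]; intro HDl.
    - exists [], Bot. split; [simpl; tauto|split; [apply (rbot HX), (mcs_thm HX), r_nec, ax_taut; taut|apply ax_taut; taut]].
    - destruct IH as [Cs [Dd [HCs [HDd Himp]]]]; [intros; apply HDl; simpl; auto|].
      destruct (HDl a (or_introl eq_refl)) as [->|[->|[[c [Hc [->| ->]]]|[Cs1 [D [HCs1 [HD [->| ->]]]]]]]].
      + exists Cs, Dd; split; auto; split; auto. simpl. apply mp1 with (Imp (Gc C' (disj Cs) Dd) (conj Dl)); [taut2|auto].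
      + exists Cs, Dd; split; auto; split; auto. simpl. apply mp1 with (Imp (Gc C' (disj Cs) Dd) (conj Dl)); [taut2|auto].
      + exists (c :: Cs), Dd. split; [intros c' [<-|Hc']; auto|split].
        * apply (rR1 HX) with (disj Cs); auto. simpl; apply ax_taut; taut.
        * simpl. apply mp3 with (Imp (Box (Neg (Or c (disj Cs)))) (Box (Neg c))) (Imp (Box (Neg (Or c (disj Cs)))) (Box (Neg (disj Cs))))
            (Imp (Gc C' (disj Cs) Dd) (conj Dl)); [taut2| apply box_mono, ax_taut; taut | apply box_mono, ax_taut; taut | auto].
      + exists (c :: Cs), Dd. split; [intros c' [<-|Hc']; auto|split].
        * apply (rR1 HX) with (disj Cs); auto. simpl; apply ax_taut; taut.
        * simpl. apply mp3 with (Imp (Box (Neg (Or c (disj Cs)))) (Box (Neg c))) (Imp (Box (Neg (Or c (disj Cs)))) (Box (Neg (disj Cs))))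
            (Imp (Gc C' (disj Cs) Dd) (conj Dl)); [taut2| apply box_mono, ax_taut; taut | apply box_mono, ax_taut; taut | auto].
      + exists (Cs1 ++ Cs), (Or D Dd). split; [intros c' Hc'; destruct (in_app_or _ _ _ Hc'); auto|split].
        * apply (rJ3 HX); [apply (rR1 HX) with (disj Cs1); auto; apply disj_app_l|apply (rR1 HX) with (disj Cs); auto; apply disj_app_r].
        * simpl.
          assert (E1 : prv (Imp (disj Cs) (disj (Cs1 ++ Cs)))) by apply disj_app_r.
          assert (E2 : prv (Imp (Box (Neg (disj (Cs1 ++ Cs)))) (Box (Neg (disj Cs))))).
          { apply box_mono. apply mp1 with (Imp (disj Cs) (disj (Cs1 ++ Cs))); [taut|auto]. }
          apply mp5 with (Imp (disj Cs) (disj (Cs1 ++ Cs))) (Imp (Box (Neg (disj (Cs1 ++ Cs)))) (Box (Neg (disj Cs))))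
            (Imp (Box (Neg (Or D Dd))) (Box (Neg D))) (Imp (Box (Neg (Or D Dd))) (Box (Neg Dd)))
            (Imp (Gc C' (disj Cs) Dd) (conj Dl)); [taut2|auto|auto| apply box_mono, ax_taut; taut | apply box_mono, ax_taut; taut | auto].
      + exists (Cs1 ++ Cs), (Or D Dd). split; [intros c' Hc'; destruct (in_app_or _ _ _ Hc'); auto|split].
        * apply (rJ3 HX); [apply (rR1 HX) with (disj Cs1); auto; apply disj_app_l|apply (rR1 HX) with (disj Cs); auto; apply disj_app_r].
        * simpl.
          assert (E1 : prv (Imp (disj Cs) (disj (Cs1 ++ Cs)))) by apply disj_app_r.
          assert (E2 : prv (Imp (Box (Neg (disj (Cs1 ++ Cs)))) (Box (Neg (disj Cs))))).
          { apply box_mono. apply mp1 with (Imp (disj Cs) (disj (Cs1 ++ Cs))); [taut|auto]. }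
          apply mp5 with (Imp (disj Cs) (disj (Cs1 ++ Cs))) (Imp (Box (Neg (disj (Cs1 ++ Cs)))) (Box (Neg (disj Cs))))
            (Imp (Box (Neg (Or D Dd))) (Box (Neg D))) (Imp (Box (Neg (Or D Dd))) (Box (Neg Dd)))
            (Imp (Gc C' (disj Cs) Dd) (conj Dl)); [taut2|auto|auto| apply box_mono, ax_taut; taut | apply box_mono, ax_taut; taut | auto]. }
  destruct (succ_exists (lastM (fst x)) P' HX) as [Z [HZ [HZb HZP]]].
  { intros Dl HDl HXD. destruct (Hcons Dl HDl) as [Cs [Dd [HCs [HDd Himp]]]].
    assert (HBE : lastM (fst x) (Rhd B (disj Cs))).
    { apply (core_c HX B C' (disj Cs) Dd); auto.
      apply (mcs_pmp HX) with (Box (Neg (conj Dl))); auto. apply box_mono.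
      apply mp1 with (Imp (Gc C' (disj Cs) Dd) (conj Dl)); [taut2|auto]. }
    destruct (wf_J2 _ _ Hy (fst x) e0 r0 Cs B Hxy HCs HBE) as [HnB HbnB].
    apply (mcs_not HYm B); auto. apply (wf_pass Fb y (fst x) e0 r0); auto. }
  assert (Hs : succ Fb (lastM (fst x)) Z).
  { split; auto. exists (Neg C'); split; auto. split; [apply HZP; unfold P'; auto|].
    intro H. destruct (HZb _ H) as [H' _]. apply (mcs_not HZ C' H'). apply HZP; unfold P'; auto. }
  exists (fst x ++ [(Z, Datatypes.S (maxtag (snd y)))], snd y). split; [|split; [|split]].
  - apply (child_wf Fb x (snd y) Z _ Hx HZ Hs (fresh _ _ _)).
    + intros p C e r HpC Hp. apply (wf_J1 _ _ Hy p C e (r ++ e0 :: r0)); auto.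
      rewrite Hxy, Hp, <- app_assoc; auto.
    + intros p e r Cs D Hp HCs HD. apply (wf_J2 _ _ Hy p e (r ++ e0 :: r0) Cs D); auto.
      rewrite Hxy, Hp, <- app_assoc; auto.
    + intros C HC0. apply HZP. unfold P'. right; right; left. exists C; auto.
    + intros Cs D HCs HD. split; apply HZP; unfold P'; right; right; right; exists Cs, D; auto.
  - apply (child_R Fb); auto.
  - split; [apply incl_refl|]. simpl. intros p C HpC [e [r Hp]]. rewrite lastM_snoc; simpl.
    apply split_snoc in Hp. destruct Hp as [[-> [-> ->]]|[r' [-> Hp]]].
    + apply (mcs_not HZ). apply HZP. unfold P'. right; right; left. exists C; auto.
    + assert (HB' : fst e (Box (Neg C))).
      { apply (wf_J1 _ _ Hy p C e (r' ++ e0 :: r0)); auto. rewrite Hxy, Hp, <- app_assoc; auto. }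
      destruct (chain_lastbox Fb (fst x) p e r' (wf_chain _ _ Hx) Hp _ HB') as [HB'' _].
      apply (mcs_not HZ). apply (proj1 Hs _ HB'').
  - simpl. rewrite lastM_snoc. simpl. apply HZP; unfold P'; auto.
Qed.

Fixpoint bodies (A : formula) : list formula :=
  match A with
  | Imp B C | Or B C | And B C => bodies B ++ bodies C
  | Box B => B :: bodies B
  | Rhd B C => Neg B :: Neg C :: bodies B ++ bodies C
  | _ => []
  end.

Definition Vc Fb M0 H0 : W (canon Fb M0 H0) -> nat -> Prop :=
  fun v p => lastM (fst (proj1_sig v)) (Var p).

Lemma truth Fb M0 H0 A : incl (bodies A) Fb ->
  forall v, forces (canon Fb M0 H0) (Vc Fb M0 H0) v A <-> lastM (fst (proj1_sig v)) A.
Proof.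
  induction A; intros Hinc [v Hv]; pose proof (wf_last_mcs _ _ Hv) as HX; simpl in *.
  - unfold Vc; simpl; tauto.
  - split; auto. intro; apply (mcs_top HX).
  - split; [tauto|apply (mcs_bot HX)].
  - apply incl_app_inv in Hinc. destruct Hinc as [H1 H2].
    rewrite (mcs_imp HX), (IHA1 H1 (exist _ v Hv)), (IHA2 H2 (exist _ v Hv)). simpl; tauto.
  - apply incl_app_inv in Hinc. destruct Hinc as [H1 H2].
    rewrite (mcs_or HX), (IHA1 H1 (exist _ v Hv)), (IHA2 H2 (exist _ v Hv)). simpl; tauto.
  - apply incl_app_inv in Hinc. destruct Hinc as [H1 H2].
    rewrite (mcs_and HX), (IHA1 H1 (exist _ v Hv)), (IHA2 H2 (exist _ v Hv)). simpl; tauto.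
  - apply incl_cons_inv in Hinc. destruct Hinc as [HA H1]. split.
    + intro H. destruct (classic (lastM (fst v) (Box A))) as [|Hn]; auto. exfalso.
      destruct (box_witness Fb v A Hv HA Hn) as [y [Hy [Rxy HyA]]].
      apply HyA. apply (IHA H1 (exist _ y Hy)). apply H. exact Rxy.
    + intros HXB [y Hy] Rxy. apply (IHA H1 (exist _ y Hy)). simpl in Rxy |- *.
      exact (proj1 (Rn_box Fb v y A Hv Hy Rxy HXB)).
  - apply incl_cons_inv in Hinc. destruct Hinc as [HnA1 Hinc].
    apply incl_cons_inv in Hinc. destruct Hinc as [HnA2 Hinc].
    apply incl_app_inv in Hinc. destruct Hinc as [H1 H2]. split.
    + intro H. destruct (classic (lastM (fst v) (Rhd A1 A2))) as [|Hn]; auto. exfalso.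
      destruct (rhd_witness Fb v A1 A2 Hv HnA1 Hn) as [y [Hy [Rxy [HyB Hz]]]].
      destruct (H (exist _ y Hy) Rxy) as [[z Hzw] [Rxz [Syz Hz2]]].
      { apply (IHA1 H1 (exist _ y Hy)); exact HyB. }
      apply (Hz z Hzw Rxz Syz). apply (IHA2 H2 (exist _ z Hzw)); exact Hz2.
    + intros HXB [y Hy] Rxy HyB. apply (IHA1 H1 (exist _ y Hy)) in HyB.
      destruct (rhd_succ Fb v y A1 A2 Hv Hy Rxy HXB HyB HnA2) as [z [Hz [Rxz [Syz HzC]]]].
      exists (exist _ z Hz). split; [exact Rxz|split; [exact Syz|]].
      apply (IHA2 H2 (exist _ z Hz)); exact HzC.
Qed.

Theorem theorem3p3 (A : formula) :
  prv A <-> (forall F : sframe, valid_in F A).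
Proof.
  split.
  - intros H F V x. apply sound; auto.
  - intros H. apply NNPP. intro Hn.
    assert (Hc : consistent (fun B => B = Neg A)).
    { intros [L [HL Hp]]. apply Hn.
      apply mp2 with (Imp (conj L) Bot) (Imp (Neg A) (conj L)); [taut|auto|].
      apply conj_intro. intros x Hx. rewrite (HL x Hx). apply ax_taut; taut. }
    destruct (lindenbaum _ Hc) as [M0 [H0 HM0]].
    pose proof (H (canon (bodies A) M0 H0) (Vc (bodies A) M0 H0)
                  (exist _ ([(M0, 0)], []) (root_wf _ M0 H0))) as HA.
    apply (truth (bodies A) M0 H0 A (incl_refl _)) in HA.
    simpl in HA. apply (mcs_not H0 A); auto.
Qed.
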